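(* Consider the algebra of Laurent polynomials in nonzero variables $a,b,d,f,h$ with coefficients polynomial in a central parameter $G_1$, with the log-canonical Poisson bracket determined by $\{a,b\}=\{d,f\}=0,\ \{a,d\}=-\tfrac12 ad,\ \{a,f\}=\tfrac12 af,\ \{a,h\}=\tfrac12 ah,\ \{b,d\}=\tfrac14 bd,\ \{b,f\}=\tfrac14 bf,\ \{b,h\}=-\tfrac14 bh,\ \{d,h\}=\tfrac14 dh,\ \{f,h\}=\tfrac14 fh.$ Then $G_1$ and $bdh$ are Casimir elements, the symplectic leaves are $4$-dimensional, and the functions $$x_1=-bf,\qquad x_2=-G_1\frac{df}{a}-\frac{d^2}{a}-\frac{f^2}{a},\qquad x_3=-\frac{dh}{f}-\frac{ab}{f}$$ Poisson commute with $h$.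
   Context: A log-canonical bracket is extended from the generators to all Laurent polynomials by bilinearity, antisymmetry and the Leibniz rule. (These are the $\lambda$-lengths of a complete system of arcs on a Riemann sphere with two holes, one of which has three bordered cusps — the $PII^{FN}$ case.) *)

(* Defs.v *)
(* Laurent polynomials in a,b,d,f,h with coefficients in
   {poly R} (the polynomial variable 'X is the central parameter G1),
   modelled as finitely supported functions Z^5 -> {poly R}
   (multinomials' {malg _[_]}). *)
From HB Require Import structures.
From mathcomp Require Import all_boot all_order all_algebra.
From mathcomp Require Import finmap.
From mathcomp.multinomials Require Import monalg.
Set Implicit Arguments. Unset Strict Implicit. Unset Printing Implicit Defensive.
Import Order.TTheory GRing.Theory Num.Theory.
Local Open Scope ring_scope.

(* exponent vectors; index 0,1,2,3,4 <-> a,b,d,f,h *)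
Definition expo := 'rV[int]_5.

Section Laurent.
Variable R : numFieldType.

Definition LP := {malg {poly R}[expo]}.

Definition ev (i : 'I_5) : expo := \row_j ((j == i)%:R : int).

Definition var (i : 'I_5) : LP := << ev i >>.
Definition varinv (i : 'I_5) : LP := << - ev i >>.

Definition va := var 0. Definition vb := var 1. Definition vd := var 2.
Definition vf := var 3. Definition vh := var 4.
Definition va_inv := varinv 0. Definition vf_inv := varinv 3.

Definition G1 : LP := << 'X *g 0 >>.

Definition lmul (F H : LP) : LP :=
  \sum_(k1 <- msupp F) \sum_(k2 <- msupp H) << F@_k1 * H@_k2 *g (k1 + k2) >>.

(* coefficient of the log-canonical bracket: {x_i, x_j} = omega i j x_i x_j *)
Definition omega_up (i j : nat) : R :=
  match i, j with
  | 0, 2 => - (1/2)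
  | 0, 3 => 1/2
  | 0, 4 => 1/2
  | 1, 2 => 1/4
  | 1, 3 => 1/4
  | 1, 4 => - (1/4)
  | 2, 4 => 1/4
  | 3, 4 => 1/4
  | _, _ => 0
  end.

Definition omega (i j : 'I_5) : R :=
  if (i < j)%N then omega_up i j
  else if (j < i)%N then - omega_up j i else 0.

(* the bilinear form on exponents: {x^k1, x^k2} = form k1 k2 x^(k1+k2) *)
Definition form (k1 k2 : expo) : R :=
  \sum_(i < 5) \sum_(j < 5) (k1 0 i)%:~R * (k2 0 j)%:~R * omega i j.

(* the bracket, extended from the generators by bilinearity, antisymmetry
   and the Leibniz rule (G1 central); explicitly on Laurent monomials *)
Definition pbr (F H : LP) : LP :=
  \sum_(k1 <- msupp F) \sum_(k2 <- msupp H)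
     << F@_k1 * H@_k2 * (form k1 k2)%:P *g (k1 + k2) >>.

Definition casimir (F : LP) : Prop := forall H : LP, pbr F H = 0.

Definition lev (g : R) (p : 'rV[R]_5) (F : LP) : R :=
  \sum_(k <- msupp F) (F@_k).[g] * \prod_(i < 5) (p 0 i) ^ (k 0 i).

Definition coord (i : 'I_6) : LP :=
  match val i with 0 => G1 | n.+1 => var (inord n) end.

Definition poisson_mx (g : R) (p : 'rV[R]_5) : 'M[R]_6 :=
  \matrix_(i, j) lev g p (pbr (coord i) (coord j)).

Definition x1 : LP := - lmul vb vf.
Definition x2 : LP :=
  - lmul G1 (lmul vd (lmul vf va_inv))
  - lmul vd (lmul vd va_inv) - lmul vf (lmul vf va_inv).
Definition x3 : LP :=
  - lmul vd (lmul vh vf_inv) - lmul va (lmul vb vf_inv).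

End Laurent.

(* Main.v *)
Require Import Defs.
From HB Require Import structures.
From mathcomp Require Import all_boot all_order all_algebra.
From mathcomp Require Import finmap.
From mathcomp.multinomials Require Import monalg.
From mathcomp Require Import ring.
Import Order.TTheory GRing.Theory Num.Theory.
Local Open Scope ring_scope.
Set Implicit Arguments. Unset Strict Implicit.

Section S.
Variable R : numFieldType.
Local Notation LP := (LP R).
Local Notation lmul := (@lmul R).
Local Notation pbr := (@pbr R).
Local Notation form := (@Defs.form R).
Local Notation omega := (@Defs.omega R).

Lemma big_msupp_incl (V : zmodType) (F : LP) (d : {fset expo})
  (Phi : {poly R} -> expo -> V) : (msupp F `<=` d)%fset -> (forall k, Phi 0 k = 0) ->
  \sum_(k <- msupp F) Phi F@_k k = \sum_(k <- d) Phi F@_k k.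
Proof.
move=> le h0; rewrite (big_fset_incl _ le) // => x _ /mcoeff_outdom ->; exact: h0.
Qed.

Lemma dsum_U (c c' : {poly R}) k k'
  (Psi : {poly R} -> {poly R} -> expo -> expo -> LP) :
  (forall x k1 k2, Psi 0 x k1 k2 = 0) -> (forall x k1 k2, Psi x 0 k1 k2 = 0) ->
  \sum_(k1 <- msupp << c *g k >>) \sum_(k2 <- msupp << c' *g k' >>)
     Psi (<< c *g k >>@_k1) (<< c' *g k' >>@_k2) k1 k2 = Psi c c' k k'.
Proof.
move=> h1 h2.
rewrite (@big_msupp_incl _ _ _ (fun x k1 => \sum_(k2 <- msupp << c' *g k' >>)
     Psi x (<< c' *g k' >>@_k2) k1 k2) msuppU_le); last first.
  by move=> k1; apply: big1 => *; exact: h1.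
rewrite big_seq_fset1 mcoeffUU.
rewrite (@big_msupp_incl _ _ _ (fun x k2 => Psi c x k k2) msuppU_le); last first.
  by move=> *; exact: h2.
by rewrite big_seq_fset1 mcoeffUU.
Qed.

Lemma lmulU c c' k k' : lmul << c *g k >> << c' *g k' >> = << c * c' *g (k + k') >>.
Proof.
rewrite /lmul; apply: (@dsum_U c c' k k' (fun x y k1 k2 => << x * y *g (k1 + k2) >>)).
  by move=> *; rewrite mul0r monalgU0.
by move=> *; rewrite mulr0 monalgU0.
Qed.

Lemma pbrU c c' k k' : pbr << c *g k >> << c' *g k' >> =
   << c * c' * (form k k')%:P *g (k + k') >>.
Proof.
rewrite /pbr; apply: (@dsum_U c c' k k' (fun x y k1 k2 => << x * y * (form k1 k2)%:P *g (k1 + k2) >>)).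
  by move=> *; rewrite !mul0r monalgU0.
by move=> *; rewrite mulr0 mul0r monalgU0.
Qed.

Definition PhiH (H : LP) := fun (c : {poly R}) k1 =>
  \sum_(k2 <- msupp H) << c * H@_k2 * (form k1 k2)%:P *g (k1 + k2) >>.

Lemma PhiH0 H k : PhiH H 0 k = 0.
Proof. by apply: big1 => *; rewrite !mul0r monalgU0. Qed.

Lemma pbrD F1 F2 H : pbr (F1 + F2) H = pbr F1 H + pbr F2 H.
Proof.
rewrite /pbr.
have e1 := @big_msupp_incl _ F1 _ (PhiH H) (fsubsetUl (msupp F1) (msupp F2)) (PhiH0 H).
have e2 := @big_msupp_incl _ F2 _ (PhiH H) (fsubsetUr (msupp F1) (msupp F2)) (PhiH0 H).
have e3 := @big_msupp_incl _ (F1 + F2) _ (PhiH H) (msuppD_le F1 F2) (PhiH0 H).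
rewrite /PhiH in e1 e2 e3; rewrite e1 e2 e3 -big_split /=.
apply: eq_bigr => k _; rewrite -big_split /=; apply: eq_bigr => k2 _.
by rewrite mcoeffD !mulrDl monalgUD.
Qed.

Lemma pbrN F H : pbr (- F) H = - pbr F H.
Proof.
rewrite /pbr msuppN -sumrN; apply: eq_bigr => k _; rewrite -sumrN.
by apply: eq_bigr => k2 _; rewrite mcoeffN !mulNr monalgUN.
Qed.

Lemma pbrB F1 F2 H : pbr (F1 - F2) H = pbr F1 H - pbr F2 H.
Proof. by rewrite pbrD pbrN. Qed.

Lemma formDl k k' k2 : form (k + k') k2 = form k k2 + form k' k2.
Proof.
rewrite /form -big_split /=; apply: eq_bigr => i _; rewrite -big_split /=.
by apply: eq_bigr => j _; rewrite mxE intrD !mulrDl.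
Qed.

Lemma formNl k k2 : form (- k) k2 = - form k k2.
Proof.
rewrite /form -sumrN; apply: eq_bigr => i _; rewrite -sumrN.
by apply: eq_bigr => j _; rewrite mxE intrN !mulNr.
Qed.

Lemma form0l k2 : form 0 k2 = 0.
Proof. by rewrite /form big1 // => i _; rewrite big1 // => j _; rewrite mxE mul0r mul0r. Qed.

Lemma ev_cast (i l : 'I_5) : ((ev i) 0 l)%:~R = (l == i)%:R :> R.
Proof. by rewrite mxE; case: eqP. Qed.

Lemma form_evr k j : form k (ev j) = \sum_i (k 0 i)%:~R * omega i j.
Proof.
apply: eq_bigr => i _; rewrite (bigD1 j) //= big1 ?addr0.
  by rewrite ev_cast eqxx mulr1.
by move=> l /negPf hl; rewrite ev_cast hl mulr0 mul0r.
Qed.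

Lemma form_ev i j : form (ev i) (ev j) = omega i j.
Proof.
rewrite form_evr (bigD1 i) //= big1 ?addr0.
  by rewrite ev_cast eqxx mul1r.
by move=> l /negPf hl; rewrite ev_cast hl mul0r.
Qed.

Lemma form_decomp k k2 : form k k2 = \sum_j (k2 0 j)%:~R * form k (ev j).
Proof.
rewrite /form exchange_big /=; apply: eq_bigr => j _; rewrite big_distrr /=.
apply: eq_bigr => i _; rewrite (bigD1 j) //= big1 ?addr0.
  by rewrite ev_cast eqxx mulr1 mulrCA mulrA.
by move=> l /negPf hl; rewrite ev_cast hl mulr0 mul0r.
Qed.


Lemma lev_U g (p : 'rV[R]_5) c k : @lev R g p << c *g k >> = c.[g] * \prod_(i<5) p 0 i ^ k 0 i.
Proof.
rewrite /lev msuppU; case: eqP => [->|_]; first by rewrite big_nil horner0 mul0r.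
by rewrite big_seq_fset1 mcoeffUU.
Qed.

Lemma lev0 g (p : 'rV[R]_5) : @lev R g p 0 = 0.
Proof. by rewrite /lev msupp0 big_nil. Qed.

Lemma formr0 k : form k 0 = 0.
Proof. by rewrite /form big1 // => i _; rewrite big1 // => j _; rewrite mxE mulr0 mul0r. Qed.

Lemma pbr_r0 F c : pbr F << c *g 0 >> = 0.
Proof.
rewrite /pbr big1 // => k1 _; rewrite big_seq big1 // => k2.
move/(fsubsetP msuppU_le); rewrite in_fset1 => /eqP ->.
by rewrite formr0 mulr0 monalgU0.
Qed.

Lemma pbr_casimir_k c k : (forall j, form k (ev j) = 0) -> forall H, pbr << c *g k >> H = 0.
Proof.
move=> hk H; rewrite /pbr big_seq big1 // => k1.
move/(fsubsetP msuppU_le); rewrite in_fset1 => /eqP ->.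
apply: big1 => k2 _; rewrite form_decomp big1 ?mulr0 ?monalgU0 // => j _.
by rewrite hk mulr0.
Qed.

Lemma pbr_l0 c H : pbr << c *g 0 >> H = 0.
Proof. by apply: pbr_casimir_k => j; rewrite form0l. Qed.

Lemma pbrU0 c c' k k' : form k k' = 0 -> pbr << c *g k >> << c' *g k' >> = 0.
Proof. by move=> h; rewrite pbrU h mulr0 monalgU0. Qed.

Lemma lev_pbr_var g (p : 'rV[R]_5) (i j : 'I_5) : (forall l, p 0 l != 0) ->
  @lev R g p (pbr (var R i) (var R j)) = omega i j * p 0 i * p 0 j.
Proof.
move=> hp; rewrite /var pbrU form_ev lev_U !mul1r hornerC -mulrA; congr (_ * _).
under eq_bigr => l _ do rewrite mxE exprzDr ?unitfE ?hp //.
rewrite big_split /=; congr (_ * _).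
  rewrite (bigD1 i) //= big1 ?mulr1 => [|l hl]; rewrite mxE ?eqxx ?expr1z //.
  by rewrite (negPf hl) expr0z.
rewrite (bigD1 j) //= big1 ?mulr1 => [|l hl]; rewrite mxE ?eqxx ?expr1z //.
by rewrite (negPf hl) expr0z.
Qed.
End S.

Section M.
Variable R : numFieldType.
Definition omn (n m : nat) : R := if (n < m)%N then omega_up R n m
  else if (m < n)%N then - omega_up R m n else 0.
Variable p : 'rV[R]_5.
Hypothesis hp : forall i, p 0 i != 0.
Definition pp (n : nat) := p 0 (inord n).
Definition Mx : 'M[R]_6 := \matrix_(i, j) match val i, val j with
   n.+1, m.+1 => omn n m * pp n * pp m | _, _ => 0 end.
Lemma pp_neq0 n : pp n != 0. Proof. exact: hp. Qed.

Definition Km : 'M[R]_(2,6) := \matrix_(r, i) if val r == 0%N then (val i == 0%N)%:R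
  else match val i with 2 => 1 / pp 1 | 3 => 1 / pp 2 | 5 => 1 / pp 4 | _ => 0 end.
Definition Kp : 'M[R]_(6,2) := \matrix_(i, c) if val c == 0%N then (val i == 0%N)%:R
  else if val i == 2%N then pp 1 else 0.

Lemma KM : Km *m Mx = 0.
Proof.
have h1 := pp_neq0 1; have h2 := pp_neq0 2; have h4 := pp_neq0 4.
apply/matrixP => r j; rewrite !mxE.
rewrite !big_ord_recl big_ord0 /= !mxE /=.
case: r => [[|[|//]] Hr]; case: j => [[|[|[|[|[|[|//]]]]]] Hj];
rewrite /= /omn /=; field; by rewrite ?h1 ?h2 ?h4.
Qed.

Lemma KK : Km *m Kp = 1%:M.
Proof.
have h1 := pp_neq0 1; have h2 := pp_neq0 2; have h4 := pp_neq0 4.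
apply/matrixP => r j; rewrite !mxE.
rewrite !big_ord_recl big_ord0 /= !mxE /=.
case: r => [[|[|//]] Hr]; case: j => [[|[|//]] Hj];
rewrite /=; field; by rewrite ?h1 ?h2 ?h4.
Qed.

Definition oinv (n l : nat) : R := match n, l with
  | 0, 2 => 1 | 0, 3 => -1 | 1, 2 => -2 | 1, 3 => -2
  | 2, 0 => -1 | 2, 1 => 2 | 3, 0 => 1 | 3, 1 => 2 | _, _ => 0 end.
Definition Sm : 'M[R]_(4,6) := \matrix_(k, i) ((val i == (val k).+1)%:R).
Definition Tm : 'M[R]_(6,4) := \matrix_(j, l) match val j with
   n.+1 => if (n < 4)%N then oinv n l / (pp n * pp l) else 0 | 0 => 0 end.



Lemma SMT : Sm *m Mx *m Tm = 1%:M.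
Proof.
have h0 := pp_neq0 0; have h1 := pp_neq0 1; have h2 := pp_neq0 2; have h3 := pp_neq0 3.
apply/matrixP => k l; rewrite !mxE.
rewrite !big_ord_recl big_ord0 /=.
rewrite !mxE !big_ord_recl !big_ord0 /= !mxE /=.
case: k => [[|[|[|[|//]]]] Hk]; case: l => [[|[|[|[|//]]]] Hl];
rewrite /= /omn /oinv /=; field; by rewrite ?h0 ?h1 ?h2 ?h3.
Qed.

Lemma rankMx : \rank Mx = 4%N.
Proof.
have lo : (4 <= \rank Mx)%N.
  rewrite -{1}(mxrank1 R 4) -SMT.
  exact: leq_trans (mxrankM_maxl _ _) (mxrankM_maxr _ _).
have hi : (2 <= \rank (kermx Mx))%N.
  rewrite -{1}(mxrank1 R 2) -KK.
  apply: leq_trans (mxrankM_maxl _ _) _; apply: mxrankS.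
  by apply/sub_kermxP; rewrite KM.
rewrite mxrank_ker in hi.
have := rank_leq_row Mx.
move: lo hi; case: (\rank Mx) => [|[|[|[|[|[|[|]]]]]]] //.
Qed.
End M.

Lemma poisson_Mx (R : numFieldType) g (p : 'rV[R]_5) : (forall i, p 0 i != 0) ->
  poisson_mx g p = Mx p.
Proof.
move=> hp; apply/matrixP => i j; rewrite !mxE.
case: i => [[|n] Hi]; case: j => [[|m] Hj] /=.
- by rewrite pbr_l0 lev0.
- by rewrite pbr_l0 lev0.
- by rewrite pbr_r0 lev0.
rewrite lev_pbr_var // /omega !inordK //.
Qed.

Theorem mainTheorem9 (R : numFieldType) :
  [/\ casimir (G1 R),
      casimir (lmul (vb R) (lmul (vd R) (vh R))),
      (forall (g : R) (p : 'rV[R]_5), (forall i, p 0 i != 0) ->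
          \rank (poisson_mx g p) = 4%N)
    & [/\ pbr (x1 R) (vh R) = 0, pbr (x2 R) (vh R) = 0
        & pbr (x3 R) (vh R) = 0]].
Proof.
split.
- by move=> H; apply: pbr_l0.
- rewrite /vb /vd /vh /var !lmulU; apply: pbr_casimir_k => j.
  rewrite !formDl !form_ev; case: j => [[|[|[|[|[|//]]]]] Hj]; rewrite /omega /=; by field.
- move=> g p hp; rewrite (poisson_Mx g hp); exact: (rankMx hp).
split.
- rewrite /x1 /vb /vf /vh /var lmulU pbrN pbrU0 ?oppr0 //.
  rewrite formDl !form_ev /omega /=; by field.
- rewrite /x2 /G1 /vd /vf /va_inv /varinv /vh /var !lmulU !pbrB !pbrN !pbrU0 ?subr0 ?oppr0 //;
  rewrite ?formDl ?formNl !form_ev ?form0l /omega /=; by field.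
- rewrite /x3 /va /vb /vd /vf_inv /varinv /vh /var !lmulU !pbrB !pbrN !pbrU0 ?subr0 ?oppr0 //;
  rewrite ?formDl ?formNl !form_ev ?form0l /omega /=; by field.
Qed.
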